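(* Let $n\in\mathbb{N}$, $0\le\alpha\le1$, and let $S\subseteq\mathbb{F}_2^n$ with $|S|\ge\alpha 2^n$. Then there exists $a\in\mathbb{F}_2^n$ such that the translate $S+\{a\}=\{x+a:x\in S\}$ contains a chain $C$ (with respect to the partial order $\le$ below) with $|C|\ge\alpha n$.
   Context: The partial order $\le$ on $\mathbb{F}_2^n$ is coordinatewise: $x\le y$ iff $x_i\le y_i$ (viewing $0<1$) for every coordinate $i$. A chain is a set of pairwise comparable elements. Addition is in $\mathbb{F}_2^n$. *)

(* Defs.v *)
From mathcomp Require Import all_boot all_order all_algebra.
Set Implicit Arguments. Unset Strict Implicit. Unset Printing Implicit Defensive.
Import GRing.Theory Num.Theory.
Local Open Scope ring_scope.

(* F_2^n as row vectors over 'F_2; coordinatewise order with 0 < 1. *)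
Definition cle (n : nat) (x y : 'rV['F_2]_n) : bool :=
  [forall i, (val (x ord0 i) <= val (y ord0 i))%N].

Definition is_chain (n : nat) (C : {set 'rV['F_2]_n}) : bool :=
  [forall x in C, forall y in C, cle x y || cle y x].

Definition translate (n : nat) (S : {set 'rV['F_2]_n}) (a : 'rV['F_2]_n) :=
  [set x + a | x in S].

(* Main.v *)
Require Import Defs.
From mathcomp Require Import all_boot all_order all_algebra.
Import Order.TTheory GRing.Theory Num.Theory.
Local Open Scope ring_scope.

Definition ch (n : nat) (k : nat) : 'rV['F_2]_n :=
  \row_i (if (i < k)%N then 1 else 0).

Lemma val_ch n k i : val (ch n k ord0 i) = ((i < k)%N : nat).
Proof. by rewrite mxE; case: ifP. Qed.

Lemma cle_ch n j k : (j <= k)%N -> cle (ch n j) (ch n k).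
Proof.
move=> jk; apply/forallP => i; rewrite !val_ch.
case: (ltnP i j) => // ij; by rewrite (leq_trans ij jk).
Qed.

Lemma ch_inj n : injective (fun k : 'I_n.+1 => ch n k).
Proof.
move=> j k /= e; apply/eqP; rewrite -val_eqE /=; apply/negPn/negP => ne.
wlog jk : j k e ne / (j < k)%N.
  move=> H; case: (ltngtP j k) => h; first exact: (H j k).
  - by apply: (H k j) => //; rewrite eq_sym.
  - by rewrite h eqxx in ne.
have jn : (j < n)%N by apply: leq_trans jk _; rewrite -ltnS.
have := congr1 (fun x : 'rV['F_2]_n => val (x ord0 (Ordinal jn))) e.
by rewrite /= !val_ch /= ltnn jk.
Qed.

Lemma addvv n (a : 'rV['F_2]_n) : a + a = 0.
Proof. by apply/rowP => i; rewrite !mxE -mulr2n -mulr_natr (pchar_Fp_0 (p:=2)) ?mulr0. Qed.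

Lemma in_translate n (S : {set 'rV['F_2]_n}) a x :
  (x \in translate S a) = (x + a \in S).
Proof.
apply/imsetP/idP => [[s sS ->]|xS]; first by rewrite -addrA addvv addr0.
by exists (x + a) => //; rewrite -addrA addvv addr0.
Qed.

Theorem lemma4p3 (R : realFieldType) (n : nat) (alpha : R)
  (S : {set 'rV['F_2]_n}) :
  0 <= alpha -> alpha <= 1 -> alpha * (2 ^+ n) <= (#|S|)%:R ->
  exists a : 'rV['F_2]_n, exists C : {set 'rV['F_2]_n},
    [/\ C \subset translate S a, is_chain C & alpha * n%:R <= (#|C|)%:R].
Proof.
move=> a0 a1 aS.
pose chs := [set ch n k | k : 'I_n.+1].
pose C a := [set x in chs | x + a \in S].
have cardchs : #|chs| = n.+1.
  by rewrite card_imset ?card_ord //; apply: ch_inj.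
have cardT : #|{: 'rV['F_2]_n}| = (2 ^ n)%N.
  by rewrite card_mx card_Fp // mul1n.
have sumC : (\sum_(a : 'rV['F_2]_n) #|C a| = n.+1 * #|S|)%N.
  transitivity (\sum_(a : 'rV['F_2]_n) \sum_(x in chs) nat_of_bool (x + a \in S)).
    apply: eq_bigr => a _; rewrite -sum1_card big_mkcond /= [RHS]big_mkcond /=.
    by apply: eq_bigr => x _; rewrite !inE; case: (x \in chs); case: (x + a \in S).
  rewrite exchange_big /= -cardchs -sum_nat_const.
  apply: eq_bigr => x _.
  rewrite (reindex_inj (addrI x)) /=.
  under eq_bigr do rewrite addrA addvv add0r.
  by rewrite -big_mkcond /= sum1_card.
pose am := [arg max_(a > (0 : 'rV['F_2]_n)) #|C a|].
have amax : forall a, (#|C a| <= #|C am|)%N.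
  rewrite /am; case: arg_maxnP => // b _ H a; exact: H.
have key : (n.+1 * #|S| <= #|C am| * 2 ^ n)%N.
  rewrite -sumC -cardT mulnC -sum_nat_const; apply: leq_sum => a _; exact: amax.
exists am, (C am); split.
- by apply/subsetP => x; rewrite inE in_translate => /andP[].
- apply/forallP => x; apply/implyP => /[!inE] /andP[/imsetP[j _ ->] _].
  apply/forallP => y; apply/implyP => /[!inE] /andP[/imsetP[k _ ->] _].
  by case: (leqP j k) => h; [rewrite cle_ch | rewrite orbC cle_ch // ltnW].
- have p2 : (0 : R) < 2 ^+ n by rewrite exprn_gt0.
  rewrite -(ler_pM2r p2).
  apply: (le_trans (y := (n.+1 * #|S|)%:R)); last first.
    by rewrite -natrX -natrM ler_nat.
  apply: (le_trans (y := n%:R * (alpha * 2 ^+ n))).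
    by rewrite mulrAC mulrC.
  rewrite natrM; apply: ler_pM; rewrite ?ler0n ?mulr_ge0 ?exprn_ge0 ?ler_nat //.
Qed.
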